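(* Let $\Phi$ be an irreducible root system of rank $n$ with base $\Delta$, and let $\Psi$ be a simple subroot system of $\Phi$ with $m$ simple roots, where $1\le m<n$. Then $$\frac{n}{|\Phi|}<\frac{m}{|\Psi|},$$ where $|\Phi|$ and $|\Psi|$ denote the total numbers of roots.
   Context: A simple subroot system of $\Phi$ is a subset of the form $\Psi=\{a_1\alpha_1+\dots+a_m\alpha_m:a_i\in\mathbb{Z}\}\cap\Phi$ where $\{\alpha_1,\dots,\alpha_m\}\subseteq\Delta$; then $\{\alpha_1,\dots,\alpha_m\}$ is a base of $\Psi$ (its simple roots). *)

(* Defs.v *)
From HB Require Import structures.
From mathcomp Require Import all_boot all_order all_algebra.
From mathcomp Require Import reals.
Set Implicit Arguments. Unset Strict Implicit. Unset Printing Implicit Defensive.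
Import Order.TTheory GRing.Theory Num.Theory.
Local Open Scope ring_scope.

Definition dotv (R : realType) (n : nat) (u v : 'rV[R]_n) : R := (u *m v^T) 0 0.

Definition cartan (R : realType) (n : nat) (b a : 'rV[R]_n) : R :=
  2 * dotv b a / dotv a a.

Definition reflv (R : realType) (n : nat) (a b : 'rV[R]_n) : 'rV[R]_n :=
  b - cartan b a *: a.

(* A (reduced, crystallographic) root system in R^n, given as a
   duplicate-free list of its roots. *)
Definition is_root_system (R : realType) (n : nat) (Phi : seq 'rV[R]_n) : Prop :=
  [/\ uniq Phi /\ 0 \notin Phi,
      (<<Phi>>%VS = fullv),
      (forall a b, a \in Phi -> b \in Phi -> reflv a b \in Phi),
      (forall a b, a \in Phi -> b \in Phi -> exists z : int, cartan b a = z%:~R) &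
      (forall a (c : R), a \in Phi -> c *: a \in Phi -> c = 1 \/ c = -1)].

Definition irreducible_rs (R : realType) (n : nat) (Phi : seq 'rV[R]_n) : Prop :=
  forall S : pred 'rV[R]_n,
    (forall a b, a \in Phi -> b \in Phi -> S a -> ~~ S b -> dotv a b = 0) ->
    all S Phi \/ all (predC S) Phi.

Definition in_Zspan (R : realType) (n : nat) (S : seq 'rV[R]_n) (v : 'rV[R]_n) : Prop :=
  exists c : seq int, size c = size S /\
    v = \sum_(i < size S) (c`_i)%:~R *: S`_i.

Definition is_base (R : realType) (n : nat) (Phi Delta : seq 'rV[R]_n) : Prop :=
  [/\ {subset Delta <= Phi},
      basis_of fullv Delta &
      (forall b, b \in Phi -> exists c : seq int,
         [/\ size c = size Delta,
             b = \sum_(i < size Delta) (c`_i)%:~R *: Delta`_i &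
             (all (fun z => 0 <= z) c \/ all (fun z => z <= 0) c)])].

(* Main.v *)
Require Import Defs.
From HB Require Import structures.
From mathcomp Require Import all_boot all_order all_algebra.
From mathcomp Require Import reals.
From mathcomp Require Import ring lra.
Import Order.TTheory GRing.Theory Num.Theory.
Set Implicit Arguments. Unset Strict Implicit. Unset Printing Implicit Defensive.
Local Open Scope ring_scope.

Lemma dotvE (R : realType) (n : nat) (u v : 'rV[R]_n) :
  dotv u v = \sum_j u 0 j * v 0 j.
Proof. by rewrite /dotv mxE; apply: eq_bigr => j _; rewrite mxE. Qed.

Lemma dotvC (R : realType) (n : nat) (u v : 'rV[R]_n) : dotv u v = dotv v u.
Proof. by rewrite !dotvE; apply: eq_bigr => j _; rewrite mulrC. Qed.

Lemma dotvZl (R : realType) (n : nat) k (u v : 'rV[R]_n) : dotv (k *: u) v = k * dotv u v.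
Proof. by rewrite !dotvE mulr_sumr; apply: eq_bigr => j _; rewrite mxE mulrA. Qed.

Lemma dotv_ge0 (R : realType) (n : nat) (u : 'rV[R]_n) : 0 <= dotv u u.
Proof. by rewrite dotvE; apply: sumr_ge0 => j _; rewrite -expr2 sqr_ge0. Qed.

Lemma dotv_eq0 (R : realType) (n : nat) (u : 'rV[R]_n) : dotv u u = 0 -> u = 0.
Proof.
rewrite dotvE => /eqP; rewrite psumr_eq0 => [/allP H|j _]; last by rewrite -expr2 sqr_ge0.
apply/rowP => j; rewrite mxE.
by have := H j (mem_index_enum _); rewrite -expr2 sqrf_eq0 => /eqP.
Qed.

Lemma dotv_gt0 (R : realType) (n : nat) (u : 'rV[R]_n) : u != 0 -> 0 < dotv u u.
Proof.
move=> u0; rewrite lt_def dotv_ge0 andbT; apply/eqP => /dotv_eq0 h.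
by rewrite h eqxx in u0.
Qed.

Lemma mulmx_tr_row (R : realType) (n : nat) (a b : 'rV[R]_n) :
  a *m (b^T *m b) = dotv a b *: b.
Proof. by rewrite mulmxA [a *m _]mx11_scalar mul_scalar_mx. Qed.

Lemma tr_outer (R : realType) (n : nat) (a : 'rV[R]_n) : \tr (a^T *m a) = dotv a a.
Proof. by rewrite mxtrace_mulC /mxtrace big_ord1. Qed.

Lemma sum1_seq (R : realType) (T : Type) (s : seq T) : \sum_(a <- s) (1 : R) = (size s)%:R.
Proof. by elim: s => [|x s IH]; rewrite ?big_nil // big_cons IH /= -add1n natrD. Qed.

Lemma mx_from_span (R : realType) (n : nat) (Phi : seq 'rV[R]_n) (A A' : 'M[R]_n) :
  <<Phi>>%VS = fullv -> (forall a, a \in Phi -> a *m A = a *m A') -> A = A'.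
Proof.
move=> hs h.
have hx : forall x : 'rV[R]_n, x *m A = x *m A'.
  move=> x; have : x \in <<in_tuple Phi>>%VS by rewrite hs memvf.
  move/coord_span => ->.
  rewrite !mulmx_suml; apply: eq_bigr => i _; rewrite -!scalemxAl h //.
  exact: mem_nth.
apply/row_matrixP => i; by rewrite -[A]mul1mx -[A']mul1mx !row_mul hx.
Qed.
Definition Rm (R : realType) (n : nat) (b : 'rV[R]_n) : 'M[R]_n :=
  1%:M - (2 / dotv b b) *: (b^T *m b).

Definition Mm (R : realType) (n : nat) (Phi : seq 'rV[R]_n) : 'M[R]_n :=
  \sum_(a <- Phi) (dotv a a)^-1 *: (a^T *m a).

Lemma RmE (R : realType) (n : nat) (a b : 'rV[R]_n) : a *m Rm b = reflv b a.
Proof.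
rewrite /Rm mulmxBr mulmx1 -scalemxAr mulmx_tr_row scalerA /reflv /cartan.
by congr (_ - _ *: _); ring.
Qed.

Lemma Rm_tr (R : realType) (n : nat) (b : 'rV[R]_n) : (Rm b)^T = Rm b.
Proof. by rewrite /Rm linearB /= trmx1 linearZ /= trmx_mul trmxK. Qed.

Lemma Rm_invol (R : realType) (n : nat) (b : 'rV[R]_n) : b != 0 -> Rm b *m Rm b = 1%:M.
Proof.
move=> b0; have db : dotv b b != 0 by rewrite gt_eqF ?dotv_gt0.
have XX : (b^T *m b) *m (b^T *m b) = dotv b b *: (b^T *m b).
  by rewrite -mulmxA mulmx_tr_row scalemxAr.
rewrite /Rm mulmxBl mul1mx mulmxBr mulmx1 -scalemxAl -scalemxAr XX !scalerA.
have -> : 2 / dotv b b * (2 / dotv b b) * dotv b b = 2 / dotv b b + 2 / dotv b b.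
  by field.
rewrite scalerDl; set Y := _ *: (b^T *m b).
by rewrite opprB addrK subrK.
Qed.


Lemma dotv_Rm (R : realType) (n : nat) (a b : 'rV[R]_n) : b != 0 ->
  dotv (a *m Rm b) (a *m Rm b) = dotv a a.
Proof.
move=> b0; rewrite /dotv trmx_mul Rm_tr -mulmxA (mulmxA (Rm b)) Rm_invol //.
by rewrite mul1mx.
Qed.

Lemma Mm_conj (R : realType) (n : nat) (Phi : seq 'rV[R]_n) b :
  is_root_system Phi -> b \in Phi -> Rm b *m Mm Phi *m Rm b = Mm Phi.
Proof.
case=> [[uP n0P] hspan hrefl _ _] bP.
have b0 : b != 0 by apply: contraNneq n0P => <-.
have hperm : perm_eq (map (mulmx^~ (Rm b)) Phi) Phi.
  apply: uniq_perm => //.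
    rewrite map_inj_uniq // => x y /(congr1 (mulmx^~ (Rm b))) /=.
    by rewrite -!mulmxA Rm_invol // !mulmx1.
  move=> x; apply/mapP/idP => [[y yP ->]|xP].
    by rewrite RmE hrefl.
  exists (x *m Rm b); first by rewrite RmE hrefl.
  by rewrite -mulmxA Rm_invol // mulmx1.
rewrite /Mm mulmx_sumr mulmx_suml -[RHS](perm_big _ hperm) big_map.
apply: eq_bigr => a _.
rewrite dotv_Rm //.
rewrite (_ : Rm b *m ((dotv a a)^-1 *: (a^T *m a)) *m Rm b =
   (dotv a a)^-1 *: (Rm b *m (a^T *m a) *m Rm b)); last by rewrite -scalemxAr -scalemxAl.
congr (_ *: _).
by rewrite trmx_mul Rm_tr !mulmxA.
Qed.

Lemma Mm_tr (R : realType) (n : nat) (Phi : seq 'rV[R]_n) : (Mm Phi)^T = Mm Phi.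
Proof.
rewrite /Mm raddf_sum; apply: eq_bigr => a _.
by rewrite /= linearZ /= trmx_mul trmxK.
Qed.

Lemma Mm_root (R : realType) (n : nat) (Phi : seq 'rV[R]_n) b :
  is_root_system Phi -> b \in Phi ->
  b *m Mm Phi = (dotv (b *m Mm Phi) b / dotv b b) *: b.
Proof.
move=> rs bP; have := rs; case=> [[uP n0P] _ _ _ _].
have b0 : b != 0 by apply: contraNneq n0P => <-.
have db : dotv b b != 0 by rewrite gt_eqF ?dotv_gt0.
set v := b *m Mm Phi.
have bR : b *m Rm b = - b.
  rewrite RmE /reflv /cartan -mulrA divff // mulr1 scaler_nat mulr2n.
  by rewrite opprD addrA subrr sub0r.
have h : v = - (v *m Rm b).
  rewrite /v -{1}(Mm_conj rs bP) !mulmxA bR.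
  by rewrite mulNmx mulNmx.
rewrite RmE /reflv opprB in h.
have h2 : v + v = cartan v b *: b by rewrite {1}h subrK.
have e : (1/2 : R) * 2%:R = 1 by field.
transitivity ((1/2 : R) *: (v + v)); first by rewrite -mulr2n -scaler_nat scalerA e scale1r.
rewrite h2 scalerA /cartan; congr (_ *: _); field; exact: db.
Qed.

Lemma dotv_sym_Mm (R : realType) (n : nat) (Phi : seq 'rV[R]_n) a b :
  dotv (a *m Mm Phi) b = dotv a (b *m Mm Phi).
Proof. by rewrite /dotv trmx_mul Mm_tr mulmxA. Qed.

Lemma Mm_scalar (R : realType) (n : nat) (Phi : seq 'rV[R]_n) a0 :
  is_root_system Phi -> irreducible_rs Phi -> a0 \in Phi ->
  Mm Phi = (dotv (a0 *m Mm Phi) a0 / dotv a0 a0)%:M.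
Proof.
move=> rs irr a0P; have := rs; case=> [_ hspan _ _ _].
pose lam (a : 'rV[R]_n) := dotv (a *m Mm Phi) a / dotv a a.
have key : forall a b, a \in Phi -> b \in Phi -> dotv a b != 0 -> lam a = lam b.
  move=> a b aP bP ab0.
  have := dotv_sym_Mm Phi a b.
  rewrite (Mm_root rs aP) (Mm_root rs bP) dotvZl [dotv a (_ *: b)]dotvC dotvZl [dotv b a]dotvC.
  by move/(mulIf ab0).
have hS : forall a b, a \in Phi -> b \in Phi -> (fun a => lam a == lam a0) a ->
    ~~ (fun a => lam a == lam a0) b -> dotv a b = 0.
  move=> a b aP bP /eqP Sa Sb; apply/eqP; apply: contraNT Sb => ab0.
  by rewrite -Sa (key _ _ aP bP ab0).
have [allS|allN] := irr _ hS.
- apply: (mx_from_span hspan) => a aP.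
  rewrite (Mm_root rs aP) mul_mx_scalar; congr (_ *: _).
  exact/eqP/(allP allS).
- by have := allP allN a0 a0P; rewrite /= eqxx.
Qed.

Lemma tr_Mm (R : realType) (n : nat) (Phi : seq 'rV[R]_n) :
  0 \notin Phi -> \tr (Mm Phi) = (size Phi)%:R.
Proof.
move=> n0; rewrite /Mm raddf_sum -sum1_seq big_seq_cond [RHS]big_seq_cond.
apply: eq_bigr => a /andP [aP _]; rewrite /= mxtraceZ tr_outer mulVf //.
by rewrite gt_eqF ?dotv_gt0 //; apply: contraNneq n0 => <-.
Qed.

Definition Bm (R : realType) (n : nat) (S : seq 'rV[R]_n) : 'M[R]_(size S, n) :=
  \matrix_(i < size S, j < n) (S`_i 0 j).

Lemma Bm_row (R : realType) (n : nat) (S : seq 'rV[R]_n) i : row i (Bm S) = S`_i.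
Proof. by apply/rowP => j; rewrite !mxE. Qed.
Definition Gm (R : realType) (n : nat) (S : seq 'rV[R]_n) := Bm S *m (Bm S)^T.
Definition Pm (R : realType) (n : nat) (S : seq 'rV[R]_n) : 'M[R]_n :=
  (Bm S)^T *m invmx (Gm S) *m Bm S.

Lemma Bm_inj (R : realType) (n : nat) (S : seq 'rV[R]_n) :
  free S -> forall v : 'rV[R]_(size S), v *m Bm S = 0 -> v = 0.
Proof.
move=> fS v; rewrite mulmx_sum_row => h.
have fT : free (in_tuple S) by [].
have := (freeP fT) (fun i => v 0 i).
rewrite (eq_bigr (fun i => v 0 i *: row i (Bm S))) => [/(_ h) h0|i _]; last by rewrite Bm_row.
by apply/rowP => i; rewrite h0 mxE.
Qed.

Lemma Gm_unit (R : realType) (n : nat) (S : seq 'rV[R]_n) :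
  free S -> Gm S \in unitmx.
Proof.
move=> fS; rewrite -row_free_unit; apply: inj_row_free => v h.
apply: (Bm_inj fS); apply: dotv_eq0.
by rewrite /dotv trmx_mul mulmxA -(mulmxA v) -/(Gm S) h mul0mx mxE.
Qed.

Lemma Gm_tr (R : realType) (n : nat) (S : seq 'rV[R]_n) : (Gm S)^T = Gm S.
Proof. by rewrite /Gm trmx_mul trmxK. Qed.

Lemma Pm_tr (R : realType) (n : nat) (S : seq 'rV[R]_n) : (Pm S)^T = Pm S.
Proof. by rewrite /Pm !trmx_mul trmxK trmx_inv Gm_tr mulmxA. Qed.

Lemma Pm_idem (R : realType) (n : nat) (S : seq 'rV[R]_n) :
  free S -> Pm S *m Pm S = Pm S.
Proof.
move=> fS; rewrite /Pm -!mulmxA; congr (_ *m _).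
by rewrite !mulmxA -(mulmxA _ (Bm S)) -/(Gm S) mulVmx ?Gm_unit // mul1mx.
Qed.

Lemma tr_Pm (R : realType) (n : nat) (S : seq 'rV[R]_n) :
  free S -> \tr (Pm S) = (size S)%:R.
Proof.
move=> fS; rewrite /Pm -mulmxA mxtrace_mulC -mulmxA -/(Gm S) mulVmx ?Gm_unit //.
exact: mxtrace1.
Qed.

Lemma Pm_fix (R : realType) (n : nat) (S : seq 'rV[R]_n) (c : 'rV[R]_(size S)) :
  free S -> (c *m Bm S) *m Pm S = c *m Bm S.
Proof.
move=> fS; rewrite /Pm !mulmxA -(mulmxA c) -/(Gm S) mulmxK ?Gm_unit //.
Qed.

Lemma Pm_zero (R : realType) (n : nat) (S : seq 'rV[R]_n) a (c : 'rV[R]_(size S)) :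
  free S -> a *m Pm S = 0 -> dotv a (c *m Bm S) = 0.
Proof.
move=> fS h.
have h1 : a *m (Bm S)^T *m invmx (Gm S) = 0.
  by apply: (Bm_inj fS); rewrite /Pm !mulmxA in h.
have h2 : a *m (Bm S)^T = 0.
  by rewrite -(mulmxKV (Gm_unit fS) (a *m (Bm S)^T)) h1 mul0mx.
by rewrite /dotv trmx_mul mulmxA h2 mul0mx mxE.
Qed.

Lemma Zspan_Bm (R : realType) (n : nat) (S : seq 'rV[R]_n) v :
  in_Zspan S v -> exists c, v = c *m Bm S.
Proof.
case=> c [_ ->]; exists (\row_i (c`_i)%:~R); rewrite mulmx_sum_row.
by apply: eq_bigr => i _; rewrite Bm_row mxE.
Qed.

Theorem lemma3 (R : realType) (n : nat) (Phi Delta : seq 'rV[R]_n)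
    (S : seq 'rV[R]_n) (Psi : seq 'rV[R]_n) (m : nat) :
  is_root_system Phi -> irreducible_rs Phi -> is_base Phi Delta ->
  uniq S -> {subset S <= Delta} -> size S = m -> (1 <= m)%N -> (m < n)%N ->
  uniq Psi -> (forall v, v \in Psi <-> v \in Phi /\ in_Zspan S v) ->
  (n%:R / (size Phi)%:R : R) < m%:R / (size Psi)%:R.
Proof.
move=> rs irr [subD basD _] uS subS sizeS m1 mn uPsi hPsi.
have := rs; case=> [[uP n0P] hspan _ _ _].
have fD := basis_free basD.
have fS : free S.
  have -> : free S = free (filter (mem S) Delta).
    apply: perm_free; apply: uniq_perm => //; first by rewrite filter_uniq // free_uniq.
    by move=> x; rewrite mem_filter; apply/idP/andP => [xS|[]//]; split => //; exact: subS.
  exact: filter_free.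
subst m.
have SPsi : forall i, (i < size S)%N -> S`_i \in Psi.
  move=> i ilt; apply/hPsi; split; first by apply: subD; apply: subS; exact: mem_nth.
  exists (mkseq (fun j => (j == i)%:Z) (size S)); split; first by rewrite size_mkseq.
  rewrite (bigD1 (Ordinal ilt)) //= big1 ?addr0 => [|j /eqP hj].
    by rewrite nth_mkseq // eqxx scale1r.
  rewrite nth_mkseq //=; case: eqP => [e|_]; last by rewrite scale0r.
  by exfalso; apply: hj; apply: val_inj.
have s0Psi := SPsi 0%N m1.
have s0Phi : S`_0 \in Phi by have := (hPsi (S`_0)).1 s0Psi; case.
have hM := Mm_scalar rs irr s0Phi.
set l0 := _ / _ in hM.
have hPhi : (size Phi)%:R = l0 *+ n by rewrite -(tr_Mm n0P) hM mxtrace_scalar.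
pose F (a : 'rV[R]_n) := dotv (a *m Pm S) (a *m Pm S) / dotv a a.
have hT : l0 * (size S)%:R = \sum_(a <- Phi) F a.
  transitivity (\tr (Pm S *m Mm Phi *m Pm S)).
    by rewrite hM mul_mx_scalar -scalemxAl Pm_idem // mxtraceZ tr_Pm.
  rewrite /Mm mulmx_sumr mulmx_suml raddf_sum; apply: eq_bigr => a _.
  rewrite -scalemxAr -scalemxAl /= mxtraceZ /F mulrC.
  congr (_ * _); rewrite -tr_outer; congr (\tr _).
  by rewrite trmx_mul Pm_tr !mulmxA.
have dpos : forall a, a \in Phi -> 0 < dotv a a.
  by move=> a aP; apply: dotv_gt0; apply: contraNneq n0P => <-.
have hin : \sum_(a <- Phi | a \in Psi) F a = (size Psi)%:R.
  rewrite -big_filter -sum1_seq.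
  have pf : perm_eq (filter (mem Psi) Phi) Psi.
    apply: uniq_perm => //; first by rewrite filter_uniq.
    move=> x; rewrite mem_filter; apply/andP/idP => [[]//|xPsi]; split => //.
    by have := (hPsi x).1 xPsi; case.
  rewrite (perm_big _ pf) !big_seq; apply: eq_bigr => a aPsi.
  have [aP /Zspan_Bm [c ec]] := (hPsi a).1 aPsi.
  rewrite /F ec Pm_fix // -ec divff //; apply: lt0r_neq0; exact: dpos.
have hsplit : l0 * (size S)%:R = (size Psi)%:R + \sum_(a <- Phi | a \notin Psi) F a.
  by rewrite hT (bigID (fun a => a \in Psi)) /= hin.
have Fge : forall a, a \in Phi -> 0 <= F a.
  by move=> a aP; rewrite /F divr_ge0 ?dotv_ge0.
have rest_pos : 0 < \sum_(a <- Phi | a \notin Psi) F a.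
  case: (boolP (has (fun a => (a \notin Psi) && (a *m Pm S != 0)) Phi)) =>
      [/hasP [a aP /andP [aN aP0]] | hN].
    have Fa : 0 < F a.
      by apply: divr_gt0; [exact: dotv_gt0 | exact: dpos].
    have r2g : 0 <= \sum_(i <- [seq i <- Phi | i \notin Psi] | i != a) F i.
      rewrite big_seq_cond; apply: sumr_ge0 => b /andP [].
      by rewrite mem_filter => /andP [_ bP] _; apply: Fge.
    rewrite -big_filter (bigD1_seq a) ?filter_uniq ?mem_filter ?aN //=.
    apply: (lt_le_trans Fa); rewrite lerDl; exact: r2g.
  exfalso.
  have hz : forall b, b \in Phi -> b \notin Psi -> b *m Pm S = 0.
    move=> b bP bN; move/hasPn: hN => /(_ b bP); rewrite bN /= negbK.
    by move/eqP.
  have hS : forall a b, a \in Phi -> b \in Phi -> (fun a => a \in Psi) a ->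
      ~~ (fun a => a \in Psi) b -> dotv a b = 0.
    move=> a b aP bP /= aPsi bN.
    have [_ /Zspan_Bm [c ->]] := (hPsi a).1 aPsi.
    by rewrite dotvC; apply: Pm_zero => //; apply: hz.
  case: (irr _ hS) => [/allP allIn | /allP allOut].
    have P1 : Pm S = 1%:M.
      apply: (mx_from_span hspan) => a aP; rewrite mulmx1.
      have [_ /Zspan_Bm [c ->]] := (hPsi a).1 (allIn a aP).
      exact: Pm_fix.
    have := tr_Pm fS; rewrite P1 mxtrace1 => /eqP; rewrite eqr_nat => /eqP e.
    by rewrite -e ltnn in mn.
  by have := allOut _ s0Phi; rewrite /= s0Psi.
have n0 : (0 < n)%N by apply: leq_ltn_trans mn.
have nR : (0 : R) < n%:R by rewrite ltr0n.
have PsiR : (0 : R) < (size Psi)%:R.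
  by rewrite ltr0n; case: (Psi) s0Psi.
have l0pos : 0 < l0.
  have : (0 : R) < (size Phi)%:R by rewrite ltr0n; case: (Phi) s0Phi.
  rewrite hPhi -mulr_natr => h; rewrite -(pmulr_lgt0 _ nR); exact: h.
have hPhi' : (size Phi)%:R = l0 * n%:R by rewrite hPhi mulr_natr.
rewrite hPhi' -subr_gt0.
have -> : (size S)%:R / (size Psi)%:R - n%:R / (l0 * n%:R) =
    (l0 * (size S)%:R - (size Psi)%:R) / (l0 * (size Psi)%:R).
  by field; rewrite !lt0r_neq0.
apply: divr_gt0; first by lra.
exact: mulr_gt0.
Qed.
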